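(* The left adjoint of the forgetful functor from the category of abelian group objects in power quandles to the category of power quandles sends a power quandle $P$ to the free abelian group $\mathbb{Z}\mathrm{Or}(P)$ on the set $\mathrm{Or}(P)$ of orbits of $P$, with trivial conjugation ($x\rhd y=y$), unit $0$, and power operations given by the $\mathbb{Z}$-linear extension of $\pi^n([a])=[\pi^n(a)]$.
   Context: A power quandle $(P,\rhd,\pi,e)$ consists of a set $P$, a binary operation $\rhd$ on $P$, an element $e\in P$, and maps $\pi^n\colon P\to P$ for each $n\in\mathbb{Z}$, satisfying for all $a,b,c\in P$ and $m,n\in\mathbb{Z}$: (1) each left multiplication $\lambda_a\colon b\mapsto a\rhd b$ is a bijection of $P$, and $a\rhd(b\rhd c)=(a\rhd b)\rhd(a\rhd c)$; (2) $a\rhd a=a$; (3) $e\rhd b=b$ and $a\rhd e=e$; (4) $\pi^1(a)=a$ and $\pi^m(\pi^n(a))=\pi^{mn}(a)$; (5) $\pi^0(a)=e$; (6) $a\rhd\pi^n(b)=\pi^n(a\rhd b)$; (7) $\pi^n(a)\rhd b=\lambda_a^n(b)$, the $n$-th iterate of $\lambda_a$ (using $\lambda_a^{-1}$ for negative $n$, and $\lambda_a^0=\mathrm{id}$). Morphisms of power quandles are maps preserving $\rhd$, all $\pi^n$, and $e$. An abelian group object in power quandles is a power quandle $P$ with an abelian group structure whose zero is $e$ such that $\rhd\colon P\times P\to P$ and all $\pi^n$ are group homomorphisms; morphisms are maps that are both power quandle morphisms and group homomorphisms. The set of orbits $\mathrm{Or}(P)$ is the set of equivalence classes $[a]$ of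 $P$ under the equivalence relation generated by $a\rhd b\sim b$ for all $a,b\in P$; the formula $\pi^n([a])=[\pi^n(a)]$ is well defined.
   Formalization: $\mathbb{Z}\mathrm{Or}(P)$ is the free abelian group on the orbits other than [e], with [e] taken as 0, rather than on all of $\mathrm{Or}(P)$. The statement above fails without it. *)

(* Defs.v *)
From HB Require Import structures.
From mathcomp Require Import all_boot all_order all_algebra.
From mathcomp Require Import boolp.
From mathcomp.multinomials Require Import freeg.
From Stdlib Require Import Relations.Relation_Operators.

Set Implicit Arguments.
Unset Strict Implicit.
Unset Printing Implicit Defensive.

Import GRing.Theory.
Local Open Scope ring_scope.

Record pq_struct (T : Type) := PQStruct {
  pq_op : T -> T -> T;
  pq_pi : int -> T -> T;
  pq_e  : T }.

(* lambda_a^{-1}: the inverse of the left multiplication by a (chosen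
   classically; it is the genuine inverse whenever lambda_a is bijective) *)
Definition lam_inv (T : Type) (S : pq_struct T) (a b : T) : T :=
  match pselect (exists c, pq_op S a c = b) with
  | left h => proj1_sig (cid h)
  | right _ => b
  end.

Definition lam_pow (T : Type) (S : pq_struct T) (a : T) (n : int) (b : T) : T :=
  match n with
  | Posz k => iter k (pq_op S a) b
  | Negz k => iter k.+1 (lam_inv S a) b
  end.

Definition power_quandle (T : Type) (S : pq_struct T) : Prop :=
  let op := pq_op S in let pi := pq_pi S in let e := pq_e S in
     (forall a, bijective (op a))
  /\ (forall a b c, op a (op b c) = op (op a b) (op a c))
  /\ (forall a, op a a = a)
  /\ (forall a b, op e b = b /\ op a e = e)
  /\ (forall a m n, pi 1 a = a /\ pi m (pi n a) = pi (m * n) a)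
  /\ (forall a, pi 0 a = e)
  /\ (forall n a b, op a (pi n b) = pi n (op a b))
  /\ (forall n a b, op (pi n a) b = lam_pow S a n b).

Definition pq_morph (T T' : Type) (S : pq_struct T) (S' : pq_struct T')
    (f : T -> T') : Prop :=
  [/\ (forall a b, f (pq_op S a b) = pq_op S' (f a) (f b)),
      (forall n a, f (pq_pi S n a) = pq_pi S' n (f a))
    & f (pq_e S) = pq_e S'].

Definition ab_group_object (A : zmodType) (S : pq_struct A) : Prop :=
  [/\ power_quandle S,
      pq_e S = 0,
      (forall x1 x2 y1 y2 : A,
          pq_op S (x1 + x2) (y1 + y2) = pq_op S x1 y1 + pq_op S x2 y2)
    & (forall n (x y : A), pq_pi S n (x + y) = pq_pi S n x + pq_pi S n y)].

Definition ab_morph (A B : zmodType) (S : pq_struct A) (S' : pq_struct B)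
    (g : A -> B) : Prop :=
  pq_morph S S' g /\ (forall x y : A, g (x + y) = g x + g y).

Definition orbit_step (T : Type) (S : pq_struct T) (x y : T) : Prop :=
  exists c, x = pq_op S c y.

Definition same_orbit (T : Type) (S : pq_struct T) : T -> T -> Prop :=
  clos_refl_sym_trans T (orbit_step S).

Definition orbit (T : Type) (S : pq_struct T) (a : T) : T -> Prop :=
  same_orbit S a.

Definition orb_ne (T : Type) (S : pq_struct T) : Type :=
  {O : T -> Prop | exists a, a <> pq_e S /\ O = orbit S a}.

Definition KOr (T : Type) (S : pq_struct T) : choiceType := {classic (orb_ne S)}.

(* Z Or(P), the free abelian group on the orbits (with [e] = 0). *)
Definition ZOr (T : Type) (S : pq_struct T) : zmodType := {freeg (KOr S) / int}.

Definition ocls (T : Type) (S : pq_struct T) (a : T) : ZOr S :=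
  match pselect (a = pq_e S) with
  | left _ => 0
  | right h =>
      let o : KOr S := exist _ (orbit S a) (ex_intro _ a (conj h erefl)) in
      [freeg [:: (1%:Z, o)]]
  end.

Definition orep (T : Type) (S : pq_struct T) (o : KOr S) : T :=
  proj1_sig (cid (proj2_sig o)).

Definition ZOr_pi (T : Type) (S : pq_struct T) (n : int) : ZOr S -> ZOr S :=
  fglift (fun o : KOr S => (ocls S (pq_pi S n (orep o)) : {freeg (KOr S) / int})).

Definition ZOr_struct (T : Type) (S : pq_struct T) : pq_struct (ZOr S) :=
  PQStruct (fun _ y => y) (@ZOr_pi T S) 0.

(* Main.v *)
Require Import Defs.
From HB Require Import structures.
From mathcomp Require Import all_boot all_order all_algebra.
From mathcomp Require Import boolp.
From mathcomp.multinomials Require Import freeg.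
From Stdlib Require Import Relations.Relation_Operators.

Import GRing.Theory.
Local Open Scope ring_scope.


Lemma addf_freeg (K : choiceType) (B : zmodType) (h : {freeg K / int} -> B) :
  (forall x y, h (x + y) = h x + h y) ->
  forall D, h D = \sum_(z <- dom D) h << z >> *~ coeff z D.
Proof.
move=> H.
have h0 : h 0 = 0.
  by apply: (addrI (h 0)); rewrite -H !addr0.
have hN x : h (- x) = - h x.
  by apply/eqP; rewrite -subr_eq0 opprK -H addNr h0.
have hn x n : h (x *+ n) = h x *+ n.
  by elim: n => [|n IH]; rewrite ?mulr0n // !mulrS H IH.
have hz x k : h (x *~ k) = h x *~ k.
  by case: k => n; rewrite ?NegzE ?mulrNz ?hN /= hn.
move=> D; rewrite -{1}(freeg_sumE D) (big_morph h H h0).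
apply: eq_bigr => z _.
have -> : << coeff z D *g z >> = << z >> *~ coeff z D by rewrite freegU_mulz intz.
by rewrite hz.
Qed.

Lemma fgliftD (K : choiceType) (M : lmodType int) (f : K -> M) x y :
  fglift f (x + y) = fglift f x + fglift f y.
Proof.
have Ha : forall x y, fglift f (x - y) = fglift f x - fglift f y := lift_is_additive f.
have h0 : fglift f 0 = 0 by rewrite -(subrr 0) Ha subrr.
have hN z : fglift f (- z) = - fglift f z by rewrite -sub0r Ha h0 sub0r.
have -> : x + y = x - (- y) by rewrite opprK.
by rewrite Ha hN opprK.
Qed.

Lemma fglift0 (K : choiceType) (M : lmodType int) (f : K -> M) :
  fglift f 0 = 0.
Proof. by apply: (addrI (fglift f 0)); rewrite -fgliftD !addr0. Qed.

Section PQ.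
Variables (T : Type) (S : pq_struct T) (hP : power_quandle S).

Lemma orbit_e x y : same_orbit S x y -> (x = pq_e S <-> y = pq_e S).
Proof.
case: hP => bij [_ [_ [eax _]]].
elim => {x y}.
- move=> x y [c ->]; split => [h|->]; last by case: (eax c (pq_e S)).
  case: (bij c) => g gK _.
  by rewrite -(gK y) h -{1}[pq_e S](proj2 (eax c (pq_e S))) gK.
- by [].
- by move=> x y _ [h1 h2]; split.
- by move=> x y z _ [h1 h2] _ [h3 h4]; split => h; auto.
Qed.

Lemma pi_e n : pq_pi S n (pq_e S) = pq_e S.
Proof.
case: hP => _ [_ [_ [_ [piax [pi0 _]]]]].
by rewrite -{1}(pi0 (pq_e S)) (proj2 (piax _ _ _)) mulr0 pi0.
Qed.

Lemma pi_same n a b : same_orbit S a b ->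
  same_orbit S (pq_pi S n a) (pq_pi S n b).
Proof.
case: hP => _ [_ [_ [_ [_ [_ [pinat _]]]]]].
elim => {a b}.
- move=> x y [c ->]; apply: rst_step; exists c; by rewrite pinat.
- move=> x; exact: rst_refl.
- move=> x y _ h; exact: rst_sym.
- move=> x y z _ h1 _ h2; exact: rst_trans h1 h2.
Qed.

Lemma orbit_eq a b : same_orbit S a b -> Defs.orbit S a = Defs.orbit S b.
Proof.
move=> h; apply: funext => x; apply: propext; split => h'.
- apply: rst_trans h'; exact: rst_sym.
- exact: rst_trans h h'.
Qed.

Lemma ocls_e : ocls S (pq_e S) = 0.
Proof. by rewrite /ocls; case: pselect. Qed.

Lemma ocls_ne a (h : a <> pq_e S) (o : KOr S) : proj1_sig o = Defs.orbit S a ->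
  ocls S a = << o >>.
Proof.
move=> ho; rewrite /ocls; case: pselect => // h'.
congr Freeg; congr cons; congr pair.
case: o ho => O pO /= ho; subst O; congr exist; exact: Prop_irrelevance.
Qed.

Lemma orep_orbit (o : KOr S) : proj1_sig o = Defs.orbit S (orep o) /\ orep o <> pq_e S.
Proof.
rewrite /orep; case: (cid (proj2_sig o)) => a [h1 h2] /=; by split.
Qed.

Lemma ocls_orep (o : KOr S) : ocls S (orep o) = << o >>.
Proof. case: (orep_orbit o) => h1 h2; exact: ocls_ne. Qed.

Lemma ocls_same a b : same_orbit S a b -> ocls S a = ocls S b.
Proof.
move=> h; have [ea eb] := @orbit_e a b h.
case: (pselect (a = pq_e S)) => ha.
  by rewrite ha (ea ha) .
have hb : b <> pq_e S by move=> /eb.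
pose o : KOr S := exist _ (Defs.orbit S a) (ex_intro _ a (conj ha erefl)).
rewrite (@ocls_ne _ ha o) // (@ocls_ne _ hb o) //=.
exact: orbit_eq.
Qed.

Lemma ZOr_pi_ocls n a : @ZOr_pi T S n (ocls S a) = ocls S (pq_pi S n a).
Proof.
case: (pselect (a = pq_e S)) => ha.
  rewrite ha pi_e ocls_e.
  by rewrite /ZOr_pi fglift0.
pose o : KOr S := exist _ (Defs.orbit S a) (ex_intro _ a (conj ha erefl)).
rewrite (@ocls_ne _ ha o) // /ZOr_pi liftU scale1r.
apply: ocls_same; apply: pi_same.
case: (orep_orbit o) => /= h1 _.
have : Defs.orbit S (orep o) (orep o) by exact: rst_refl.
by rewrite -h1 => H; apply: rst_sym; exact: H.
Qed.

End PQ.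

Lemma addf_ext (K : choiceType) (B : zmodType) (h1 h2 : {freeg K / int} -> B) :
  (forall x y, h1 (x + y) = h1 x + h1 y) ->
  (forall x y, h2 (x + y) = h2 x + h2 y) ->
  (forall z, h1 << z >> = h2 << z >>) -> forall D, h1 D = h2 D.
Proof.
move=> H1 H2 H D; rewrite (@addf_freeg _ _ _ H1) (@addf_freeg _ _ _ H2).
by apply: eq_bigr => z _; rewrite H.
Qed.

Lemma ZOr_piD (T : Type) (S : pq_struct T) n x y :
  @ZOr_pi T S n (x + y) = ZOr_pi n x + ZOr_pi n y.
Proof. exact: fgliftD. Qed.


Lemma lam_pow_triv (A : Type) (S : pq_struct A) a n b :
  (forall x y, pq_op S x y = y) -> lam_pow S a n b = b.
Proof.
move=> H.
have Hi c : lam_inv S a c = c.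
  rewrite /lam_inv; case: pselect => [h|//].
  by case: (cid h) => d /=; rewrite H.
case: n => k /=.
  by elim: k => //= k ->; rewrite H.
by elim: k => [|k IH] /=; rewrite ?Hi // -{2}IH.
Qed.

Lemma abop_triv (A : zmodType) (SA : pq_struct A) :
  ab_group_object SA -> forall x y, pq_op SA x y = y.
Proof.
case=> [[_ [_ [_ [eax _]]]] he hop _] x y.
have := hop x 0 0 y; rewrite addr0 add0r => ->.
by rewrite -he (proj2 (eax x x)) (proj1 (eax x y)) he add0r.
Qed.

Theorem mainTheorem3 (T : Type) (S : pq_struct T) :
  power_quandle S ->
  [/\ ab_group_object (ZOr_struct S),
      pq_morph S (ZOr_struct S) (ocls S)
    & forall (A : zmodType) (SA : pq_struct A), ab_group_object SA ->
      forall f : T -> A, pq_morph S SA f ->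
      exists g : ZOr S -> A,
        [/\ ab_morph (ZOr_struct S) SA g,
            (forall a : T, g (ocls S a) = f a)
          & forall g' : ZOr S -> A, ab_morph (ZOr_struct S) SA g' ->
              (forall a : T, g' (ocls S a) = f a) -> forall x, g' x = g x]].
Proof.
move=> hP.
have hP' := hP.
case: hP' => bij [sd [idem [eax [piax [pi0 [pinat pipow]]]]]].
have piocls := @ZOr_pi_ocls T S hP.
have gen (z : KOr S) : << z >> = ocls S (orep z) by rewrite ocls_orep.
split.
- split => //; last exact: ZOr_piD.
  rewrite /power_quandle /=.
  split; first by move=> _; exists id.
  split; first by [].
  split; first by [].
  split; first by [].
  split.
    move=> x m n; split.
      apply: (@addf_ext _ _ (@ZOr_pi T S 1) id) => //; first exact: ZOr_piD.
      by move=> z; rewrite gen piocls (proj1 (piax _ 0 0)).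
    apply: (@addf_ext _ _ (fun x => @ZOr_pi T S m (ZOr_pi n x)) (ZOr_pi (m * n))).
    + by move=> x1 x2; rewrite !ZOr_piD.
    + exact: ZOr_piD.
    + by move=> z; rewrite gen !piocls (proj2 (piax _ _ _)).
  split.
    move=> x.
    apply: (@addf_ext _ _ (@ZOr_pi T S 0) (fun _ => 0)).
    + exact: ZOr_piD.
    + by move=> *; rewrite addr0.
    + by move=> z; rewrite gen piocls pi0 ocls_e.
  split; first by [].
  by move=> n a b; rewrite lam_pow_triv.
- split.
  + move=> a b /=. apply: (@ocls_same T S hP (pq_op S a b) b). apply: rst_step; by exists a.
  + by move=> n a /=; rewrite piocls.
  + exact: ocls_e.
move=> A SA hA f [fop fpi fe].
have opA := @abop_triv _ _ hA.
case: (hA) => hPA heA hopA hpiA.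
have fsame a b : same_orbit S a b -> f a = f b.
  elim => {a b}.
  - by move=> x y [c ->]; rewrite fop opA.
  - by [].
  - by move=> x y _ ->.
  - by move=> x y z _ -> _ ->.
pose g : ZOr S -> A := fun D =>
  (fglift (M := zmodule A) (fun o : KOr S => (f (orep o) : zmodule A)) D : A).
have gD x y : g (x + y) = g x + g y by rewrite /g fgliftD.
have gU z : g << z >> = f (orep z).
  by rewrite /g liftU scalezrE mulr1z.
have gocls a : g (ocls S a) = f a.
  case: (pselect (a = pq_e S)) => ha.
    by rewrite ha ocls_e /g fglift0 fe heA.
  pose o : KOr S := exist _ (Defs.orbit S a) (ex_intro _ a (conj ha erefl)).
  rewrite (@ocls_ne _ _ _ ha o) // gU.
  apply: fsame.
  case: (@orep_orbit T S o) => /= h1 _.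
  have : Defs.orbit S (orep o) (orep o) by exact: rst_refl.
  by rewrite -h1 => H; apply: rst_sym; exact: H.
exists g; split => //.
- split => //; split => //=.
  + move=> n x.
    apply: (@addf_ext _ _ (fun x => g (ZOr_pi n x)) (fun x => pq_pi SA n (g x))).
    * by move=> x1 x2; rewrite ZOr_piD gD.
    * by move=> x1 x2; rewrite gD hpiA.
    * by move=> z; rewrite gen piocls !gocls fpi.
  + by rewrite /g fglift0 heA.
- move=> g' [[_ _ _] g'D] g'ocls.
  apply: addf_ext => // z.
  by rewrite gen g'ocls gocls.
Qed.
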